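(* The unrestricted black box complexity of the class of affine OneMax functions satisfies $B_{\mathcal{F}}=\Omega(n/\log n)$.
   Context: Identify $\{0,1\}$ with $\mathbb{F}_2$. $\ell(x)=\sum_{i=1}^n x_i$ (real sum). $\mathcal{F}$ is the set of functions $f(x)=\ell(Mx+b)$ on $\{0,1\}^n$ with $M\in\mathrm{GL}(n,\mathbb{F}_2)$, $b\in\mathbb{F}_2^n$ ($Mx+b$ over $\mathbb{F}_2$). For a class $\mathcal{C}$ of functions $\{0,1\}^n\to\mathbb{R}$, its (unrestricted) black box complexity is $B_{\mathcal{C}}=\inf_{A}\sup_{f\in\mathcal{C}}\mathbb{E}(T(A,f))$, where $A$ ranges over all randomized black-box search algorithms and $T(A,f)$ is the number of evaluations of $f$ made by $A$ until a global maximizer of $f$ is evaluated for the first time. *)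

(* Defs.v *)
From HB Require Import structures.
From mathcomp Require Import all_boot all_order all_algebra.
From mathcomp Require Import all_classical all_reals all_analysis.
Set Implicit Arguments. Unset Strict Implicit. Unset Printing Implicit Defensive.
Import Order.TTheory GRing.Theory Num.Theory.
Local Open Scope ring_scope.
Local Open Scope classical_set_scope.

(* Search points {0,1}^n = F_2^n, as column vectors. *)
Definition pt (n : nat) := 'cV['F_2]_n.

(* l(x) = sum_i x_i (the real sum of the 0/1 entries, here as a nat). *)
Definition ell (n : nat) (y : pt n) : nat := \sum_(i < n) ((y i ord0 != 0%R) : nat).

Definition affOneMax (n : nat) : set (pt n -> nat) :=
  [set f | exists (M : 'M['F_2]_n) (b : pt n),
      M \in unitmx /\ f = (fun x => ell (M *m x + b))].

Definition is_max (n : nat) (f : pt n -> nat) (x : pt n) : bool :=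
  [forall y, f y <= f x]%N.

(* A randomized (unrestricted) black-box algorithm: given the full history of
   (query, value) pairs, a probability distribution of the next query. *)
Definition history (n : nat) := seq (pt n * nat).
Definition algo (R : realType) (n : nat) := history n -> {ffun pt n -> R}.
Definition valid_algo (R : realType) (n : nat) (A : algo R n) : Prop :=
  forall h, (forall x, 0 <= A h x) /\ \sum_x A h x = 1.

(* Probability that, starting from history h, the next k queries of A on f
   all miss the set of global maximizers of f. *)
Fixpoint miss_prob (R : realType) (n : nat) (A : algo R n) (f : pt n -> nat)
  (k : nat) (h : history n) : R :=
  match k with
  | 0 => 1
  | k'.+1 => \sum_x A h x *
      (if is_max f x then 0 else miss_prob A f k' (rcons h (x, f x)))
  end.

(* E[T(A,f)] = sum_{k>=0} P(T > k), in the extended reals. *)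
Definition expected_time (R : realType) (n : nat) (A : algo R n)
  (f : pt n -> nat) : \bar R :=
  (\sum_(0 <= k <oo) (miss_prob A f k [::])%:E)%E.

Definition bbc (R : realType) (n : nat) (C : set (pt n -> nat)) : \bar R :=
  ereal_inf [set ereal_sup [set expected_time A f | f in C]
            | A in [set A : algo R n | valid_algo A]].

(* Main.v *)
Require Import Defs.
From HB Require Import structures.
From mathcomp Require Import all_boot all_order all_algebra.
From mathcomp Require Import all_classical all_reals all_analysis.
From mathcomp Require Import ring lra zify.
Import Order.TTheory GRing.Theory Num.Theory Num.Def.
Set Implicit Arguments. Unset Strict Implicit. Unset Printing Implicit Defensive.
Local Open Scope ring_scope.

Lemma F2fact (a b : 'F_2) : (a + b + 1 != 0) = (a == b).
Proof. by move: a b; do 2 case=> [[|[|//]]] ?. Qed.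

Lemma ell_le n (y : pt n) : (ell y <= n)%N.
Proof.
rewrite /ell; apply: leq_trans (_ : \sum_(i < n) 1 <= n)%N.
  by apply: leq_sum => i _; case: (_ != _).
by rewrite sum1_card card_ord.
Qed.

Definition fz n (z : pt n) : pt n -> nat :=
  fun x => ell (1%:M *m x + (z + const_mx 1)).

Lemma fz_in n z : @affOneMax n (fz z).
Proof. by exists 1%:M, (z + const_mx 1); rewrite unitmx1. Qed.

Lemma fzE n (z x : pt n) : fz z x = \sum_(i < n) ((x i ord0 == z i ord0) : nat).
Proof.
rewrite /fz /ell mul1mx; apply: eq_bigr => i _.
by rewrite !mxE addrA F2fact.
Qed.

Lemma fz_max n (z x : pt n) : is_max (fz z) x -> x = z.
Proof.
move/forallP/(_ z); rewrite !fzE.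
have -> : \sum_(i < n) ((z i ord0 == z i ord0) : nat) = n.
  by rewrite (eq_bigr (fun _ => 1%N)) ?sum1_card ?card_ord // => i _; rewrite eqxx.
move=> H; apply/matrixP => i j; rewrite (ord1 j).
apply/eqP; apply/negPn/negP => Hne.
have : (\sum_(k < n) ((x k ord0 == z k ord0) : nat) < n)%N.
  rewrite (bigD1 i) //= (negbTE Hne) add0n.
  apply: leq_trans (_ : \sum_(k < n | k != i) 1 < n)%N.
    by rewrite ltnS; apply: leq_sum => k _; case: (_ == _).
  rewrite sum1_card cardC1 card_ord.
  by case: n {x z H Hne} i => [[]|n].
by rewrite ltnNge H.
Qed.

Lemma miss01 (R : realType) (n : nat) (A : algo R n) (hA : valid_algo A) f k h : 0 <= miss_prob A f k h <= 1.
Proof.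
elim: k h => [|k IH] h /=; first by rewrite ler01 lexx.
apply/andP; split.
  apply: sumr_ge0 => x _; apply: mulr_ge0; first exact: (hA h).1.
  by case: ifP => _ //; case/andP: (IH (rcons h (x, f x))).
rewrite -(hA h).2; apply: ler_sum => x _.
rewrite -{2}[A h x]mulr1; apply: ler_wpM2l; first exact: (hA h).1.
by case: ifP => _ //; case/andP: (IH (rcons h (x, f x))).
Qed.

Lemma miss_rec (R : realType) (n : nat) (A : algo R n) (hA : valid_algo A) f k h : 1 - miss_prob A f k.+1 h =
  \sum_x A h x * (if is_max f x then 1 else 1 - miss_prob A f k (rcons h (x, f x))).
Proof.
rewrite /= -{1}(hA h).2 -sumrB; apply: eq_bigr => x _.
by case: ifP => _; rewrite ?mulr0 ?subr0 ?mulr1 // mulrBr mulr1.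
Qed.

Lemma key (R : realType) (n : nat) (A : algo R n) (hA : valid_algo A) k : forall h (P : pred (pt n)),
  \sum_(z | P z) (1 - miss_prob A (fz z) k h) <= (n.+2)%:R ^+ k.
Proof.
elim: k => [|k IH] h P.
  by rewrite /= big1 ?ler01 // => z _; rewrite subrr.
have gk1 : 1 <= (n.+2)%:R ^+ k :> R by rewrite exprn_ege1 // ler1n.
have inner : forall x, \sum_(z | P z)
    (if is_max (fz z) x then 1 else 1 - miss_prob A (fz z) k (rcons h (x, fz z x)))
    <= 1 + n.+1%:R * (n.+2)%:R ^+ k.
  move=> x.
  rewrite (eq_bigr (fun z => (is_max (fz z) x)%:R +
     (if is_max (fz z) x then 0 else 1 - miss_prob A (fz z) k (rcons h (x, fz z x))))); last first.
    by move=> z _; case: ifP => _; rewrite ?addr0 ?add0r.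
  rewrite big_split /=; apply: lerD.
    apply: le_trans (_ : \sum_(z | P z) (z == x)%:R <= 1).
      apply: ler_sum => z _; case Hm: (is_max _ _) => //=.
      by rewrite (fz_max Hm) eqxx.
    rewrite big_mkcond (bigD1 x) //= big1 ?addr0.
      by case: (P x); rewrite ?eqxx ?ler01.
    by move=> z /negbTE Hz; case: (P z); rewrite ?Hz.
  rewrite (partition_big (fun z => (inord (fz z x) : 'I_n.+1)) xpredT) //=.
  apply: le_trans (_ : \sum_(v < n.+1) (n.+2)%:R ^+ k <= _); last first.
    by rewrite sumr_const card_ord mulr_natl.
  apply: ler_sum => v _.
  have -> : \sum_(z | P z && (inord (fz z x) == v))
     (if is_max (fz z) x then 0 else 1 - miss_prob A (fz z) k (rcons h (x, fz z x)))
    = \sum_(z | (P z && (inord (fz z x) == v)) && ~~ is_max (fz z) x)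
       (1 - miss_prob A (fz z) k (rcons h (x, val v))).
    rewrite [RHS]big_mkcondr /=; apply: eq_bigr => z /andP[_ /eqP Hv].
    have -> : fz z x = val v.
      by rewrite -Hv /= inordK // ltnS /fz; apply: ell_le.
    by case: ifP.
  exact: IH.
under eq_bigr => z _ do rewrite (miss_rec hA).
rewrite exchange_big /=.
apply: le_trans (_ : \sum_x A h x * (1 + n.+1%:R * (n.+2)%:R ^+ k) <= _).
  apply: ler_sum => x _; rewrite -mulr_sumr; apply: ler_wpM2l; first exact: (hA h).1.
  exact: inner.
rewrite -mulr_suml (hA h).2 mul1r exprS.
set g := _ ^+ k in gk1 *.
have -> : (n.+2)%:R = n.+1%:R + 1 :> R by rewrite -natr1.
by rewrite mulrDl mul1r addrC lerD2l.
Qed.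

Lemma b1 (R : realType) (n : nat) : (256 <= n)%N -> ln ((n.+2)%:R : R) <= 2 * ln (n%:R : R).
Proof.
move=> hn.
have nr : 256 <= n%:R :> R by rewrite (ler_nat R 256 n).
have -> : 2 * ln (n%:R : R) = ln ((n%:R : R) ^+ 2) by rewrite lnXn ?mulr2n; [lra|lra].
rewrite ler_ln ?posrE ?exprn_gt0 //; try lra.
rewrite -natrX ler_nat expnS expn1; apply: leq_trans (_ : n * 2 <= _)%N; [lia | by rewrite leq_mul2l; apply/orP; right; lia].
Time Qed.
Lemma b2 (R : realType) (x : R) : 0 < x -> ln x <= 2 * Num.sqrt x.
Proof.
move=> x0.
set s := Num.sqrt x.
have s2 : s ^+ 2 = x by rewrite sqr_sqrtr //; lra.
have sp : 0 < s by rewrite sqrtr_gt0; lra.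
rewrite -{1}s2 lnXn // mulr2n.
have := ln_sublinear sp; lra.
Time Qed.
Lemma b3 (R : realType) (t : R) : 0 <= t -> (truncn t).+1%:R <= t + 1 :> R.
Proof. by move=> t0; rewrite -natr1 lerD2r truncn_le. Time Qed.
Lemma b4 (R : realType) (t : R) : 0 <= t -> t <= (truncn t).+1%:R.
Proof. by move=> t0; apply: ltW; apply: real_truncnS_gt; rewrite ger0_real. Time Qed.
Lemma arith_aux (R : realType) (t L n s Klx l2 : R) :
  Klx <= (t + 1) * (2 * L) ->
  (t + 1) * (2 * L) = n / 8 + 2 * L ->
  (n - 1) * (1/2) <= (n - 1) * l2 ->
  s * 16 <= s * s -> s * s = n -> L <= 2 * s -> 16 <= s ->
  l2 + Klx <= n * l2.
Proof. move=> h1 h2 h3 h4 s2 Ls s16. lra. Qed.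
Lemma ln2_ge (R : realType) : 1 / 2 <= ln (2 : R).
Proof.
have h1 := expR_ge1Dx (- (1/2) : R).
rewrite expRN in h1.
have hp := expR_gt0 (1/2 : R).
have h2 : expR (1/2 : R) <= 2.
  move: h1 hp; set e := expR _ => h1 hp.
  have : e * (1/2) <= e * e^-1 by rewrite ler_wpM2l //; lra.
  by rewrite mulfV ?gt_eqF //; lra.
rewrite -[X in X <= _](expRK (1/2 : R)) ler_ln ?posrE //.
Qed.
Lemma c1 (R : realType) (n K : nat) : 
  ln 2 + K%:R * ln ((n.+2)%:R : R) <= n%:R * ln (2 : R) ->
  2 * (n.+2)%:R ^+ K <= 2 ^+ n :> R.
Proof.
move=> key.
Time have p1 : 0 < 2 * (n.+2)%:R ^+ K :> R by rewrite mulr_gt0 // exprn_gt0 // ltr0n.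
Time have p2 : 0 < 2 ^+ n :> R by rewrite exprn_gt0.
Time rewrite -ler_ln ?posrE //.
Time have q1 : 0 < (n.+2)%:R ^+ K :> R by rewrite exprn_gt0 // ltr0n.
Time rewrite lnM ?posrE //.
Time rewrite lnXn //.
have two : (0:R) < 2 by lra.
Time rewrite (lnXn n two).
Time rewrite -[ln _ *+ K]mulr_natl -[ln _ *+ n]mulr_natl.
Show.
Time lra.
Time Qed.


Lemma realK (R : realType) (n : nat) : (256 <= n)%N ->
  exists K : nat, n%:R / (16 * ln (n%:R : R)) <= K%:R /\
     2 * (n.+2)%:R ^+ K <= 2 ^+ n :> R.
Proof.
move=> hn.
have nr : 256 <= n%:R :> R by rewrite (ler_nat R 256 n).
have L0 : 0 < ln (n%:R : R) by apply: ln_gt0; lra.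
have tL : n%:R / (16 * ln (n%:R : R)) * (16 * ln (n%:R : R)) = n%:R.
  by rewrite mulfVK // gt_eqF //; lra.
move: (n%:R / (16 * ln (n%:R : R))) tL => t tL.
have t0 : 0 <= t.
  have : 0 <= t * (16 * ln (n%:R : R)) by rewrite tL; lra.
  by rewrite pmulr_lge0 //; lra.
exists (truncn t).+1; split; first exact: b4.
apply: c1.
have Kt := b3 t0.
move: ((truncn t).+1%:R) Kt => Kr Kt.
have lx := b1 R hn.
have lx0 : 0 <= ln ((n.+2)%:R : R) by apply: ln_ge0; rewrite ler1n.
have n0 : 0 < n%:R :> R by lra.
have Ls := b2 n0.
have s0 : 0 <= Num.sqrt (n%:R : R) by apply: sqrtr_ge0.
have s2 : Num.sqrt (n%:R : R) ^+ 2 = n%:R by rewrite sqr_sqrtr //; lra.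
move: (Num.sqrt (n%:R : R)) s0 s2 Ls => s s0 s2 Ls.
have s16 : 16 <= s by nra.
have h1 : Kr * ln ((n.+2)%:R : R) <= (t + 1) * (2 * ln (n%:R : R)).
  by apply: (le_trans (ler_wpM2r lx0 Kt)); apply: ler_wpM2l; lra.
have h2 : (t + 1) * (2 * ln (n%:R : R)) = n%:R / 8 + 2 * ln (n%:R : R).
  by move: tL; clear; lra.
have h3 : (n%:R - 1) * (1/2) <= (n%:R - 1) * ln (2 : R).
  by rewrite ler_wpM2l ?ln2_ge //; lra.
have h4 : s * 16 <= s * s by rewrite ler_wpM2l.
move: s2; rewrite expr2 => s2.
exact: (arith_aux h1 h2 h3 h4 s2 Ls s16).
Qed.

Lemma card_pt n : #|{: pt n}| = (2 ^ n)%N.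
Proof. by rewrite card_mx card_Fp // muln1. Qed.

Lemma exists_z (R : realType) n (A : algo R n) (hA : valid_algo A) K :
  2 * (n.+2)%:R ^+ K <= 2 ^+ n :> R ->
  exists z : pt n, K%:R / 2 <= \sum_(0 <= k < K) miss_prob A (fz z) k [::].
Proof.
move=> HK.
have [//|nex] := pselect (exists z : pt n, K%:R / 2 <= \sum_(0 <= k < K) miss_prob A (fz z) k [::]).
exfalso.
have lt : forall z : pt n, \sum_(0 <= k < K) miss_prob A (fz z) k [::] < K%:R / 2.
  move=> z; rewrite ltNge; apply/negP => H; apply: nex; by exists z.
have N2 : #|{: pt n}|%:R = 2 ^+ n :> R by rewrite card_pt natrX.
have S1 : \sum_(z : pt n) \sum_(0 <= k < K) miss_prob A (fz z) k [::] < 2 ^+ n * (K%:R / 2).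
  apply: (lt_le_trans (ltr_sum _ (fun z _ => lt z))).
    by apply/hasP; exists 0; rewrite ?mem_index_enum.
  rewrite sumr_const (_ : #|(xpredT : pred (pt n))| = #|{: pt n}|); last exact: eq_card.
  by rewrite -[_ *+ #|_|]mulr_natr N2 mulrC.
have S2 : 2 ^+ n * (K%:R / 2) <= \sum_(z : pt n) \sum_(0 <= k < K) miss_prob A (fz z) k [::].
  rewrite exchange_big /=.
  apply: le_trans (_ : \sum_(0 <= k < K) (2 ^+ n / 2 : R) <= _).
    by rewrite sumr_const_nat subn0 -mulr_natl; lra.
  apply: ler_sum_nat => k /andP[_ hk].
  have := key hA k [::] xpredT.
  rewrite sumrB sumr_const (_ : #|(xpredT : pred (pt n))| = #|{: pt n}|); last exact: eq_card.
  rewrite N2.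
  have : (n.+2)%:R ^+ k <= (n.+2)%:R ^+ K :> R.
    by apply: ler_weXn2l; [rewrite ler1n | exact: ltnW].
  lra.
lra.
Qed.

Local Open Scope classical_set_scope.

Theorem theorem3 (R : realType) :
  exists c : R, 0 < c /\ exists N : nat, forall n : nat, (N <= n)%N ->
    ((c * n%:R / ln (n%:R : R))%:E <= bbc R (@affOneMax n))%E.
Proof.
exists (1/32); split; first lra.
exists 256%N => n hn.
have [K [HK1 HK2]] := realK R hn.
rewrite /bbc; apply: le_ereal_inf_tmp => _ [A hA <-].
have [z Hz] := exists_z hA HK2.
have Hin : [set expected_time A f | f in @affOneMax n] (expected_time A (fz z)).
  by exists (fz z) => //; exact: fz_in.
apply: le_trans (ereal_sup_ubound Hin).
rewrite /expected_time.
apply: le_trans (_ : (\sum_(0 <= k < K) (miss_prob A (fz z) k [::])%:E <= _)%E); last first.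
  apply: nneseries_lim_ge => k _ _; rewrite lee_fin.
  by case/andP: (miss01 hA (fz z) k [::]).
rewrite sumEFin lee_fin.
have E : 1/32 * n%:R / ln (n%:R : R) = n%:R / (16 * ln (n%:R : R)) / 2.
  by rewrite invfM; lra.
rewrite E; lra.
Qed.
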